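(* Let $\Gamma=G_3$ be the graph with two vertices $V_\alpha,V_\beta$ joined by exactly three edges (no loops), with degrees $d_\alpha,d_\beta\in\mathbb{Z}$. The family $\mathcal{F}(G_3,(d_\alpha,d_\beta))$ is jumping if and only if $0\le d_\alpha\le 1$ and $0\le d_\beta\le 1$.
   Context: Let $\Gamma$ be a connected graph (loops and multiple edges allowed) with vertices $V_1,\dots,V_n$ and integers $d_1,\dots,d_n$. A nodal curve with dual graph $\Gamma$ and rational components is a curve $C$ obtained from the disjoint union of copies $\mathbb{P}^1_{V_i}$ of $\mathbb{P}^1$ by choosing, for each edge of $\Gamma$, a point on each of its endpoint copies (all chosen points distinct) and identifying these two points to a node. A line bundle on $C$ is equivalent to line bundles on each $\mathbb{P}^1_{V_i}$ together with, at each node, an identification of the two fibres (descent data, a scalar in $\mathbb{C}^*$ after trivialising); global sections are tuples of sections on the $\mathbb{P}^1$'s compatible with these identifications. The family $\mathcal{F}(\Gamma,(d_i))$ consists of all pairs $(C,L)$ with $C$ such a curve (any choice of node positions) and $L$ a line bundle on $C$ whose pullback to $\mathbb{P}^1_{V_i}$ has degree $d_i$ for all $i$ (any descent data). $\Gamma$ with degrees $(d_i)$ is called jumping if $h^0(C,L)$ is not constant on $\mathcal{F}(\Gamma,(d_i))$, and non-jumping otherwise. *)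

(* Defs.v *)
From HB Require Import structures.
From mathcomp Require Import all_boot all_order all_algebra.
From mathcomp Require Import complex.
From mathcomp Require Import reals.
Set Implicit Arguments. Unset Strict Implicit. Unset Printing Implicit Defensive.
Import Order.TTheory GRing.Theory Num.Theory.
Local Open Scope ring_scope.

(* A graph with vertices 'I_n and edges 'I_m; edge e has endpoints
   (ends e).1 and (ends e).2 (loops and multiple edges allowed).
   Half-edges are pairs (e, b) with b = false for the first endpoint and
   b = true for the second. *)
Definition hv (n m : nat) (ends : 'I_m -> 'I_n * 'I_n) (e : 'I_m) (b : bool) : 'I_n :=
  if b then (ends e).2 else (ends e).1.

(* Number of coefficients of a section of O(d) on P^1 :
   h^0(P^1, O(d)) = d+1 if d >= 0, 0 otherwise. *)
Definition dn (d : int) : nat := match d with Posz k => k.+1 | Negz _ => 0%N end.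

Definition coefT (n : nat) (d : 'I_n -> int) : finType := {v : 'I_n & 'I_(dn (d v))}.

Section Sections.
Variable K : fieldType.
Variables (n m : nat) (ends : 'I_m -> 'I_n * 'I_n) (d : 'I_n -> int).

(* A tuple of sections of O(d v) on the copies P^1_v: a homogeneous polynomial
   of degree d v in (X,Y) on each copy, given by its coefficients. *)
Definition secs := {ffun coefT d -> K^o}.

(* value at the point with homogeneous coordinates (x,y) of the section on P^1_v:
   sum_k c_k x^k y^(d_v - k), i.e. the section in the trivialisation of the fibre
   of O(d_v) at [x:y] given by the representative (x,y). *)
Definition sec_eval (c : secs) (v : 'I_n) (p : K * K) : K :=
  \sum_(k < dn (d v)) c (Tagged (fun w => 'I_(dn (d w))) k) * p.1 ^+ k * p.2 ^+ ((dn (d v)).-1 - k)%N.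

(* Node points: pt e b is the (homogeneous coordinates of the) point on
   P^1_(hv ends e b) glued along edge e; lam e is the descent datum at the node. *)
Definition glue_defect (pt : 'I_m -> bool -> K * K) (lam : 'I_m -> K) (c : secs)
  : {ffun 'I_m -> K^o} :=
  [ffun e => sec_eval c (hv ends e true) (pt e true)
             - lam e * sec_eval c (hv ends e false) (pt e false)].

(* h^0(C, L): dimension of the space of compatible tuples of sections. *)
Definition h0 (pt : 'I_m -> bool -> K * K) (lam : 'I_m -> K) : nat :=
  \dim (lker (linfun (glue_defect pt lam))).

Definition admissible (pt : 'I_m -> bool -> K * K) (lam : 'I_m -> K) : Prop :=
  [/\ forall e b, pt e b != (0, 0),
      forall e b e' b', (e, b) != (e', b') -> hv ends e b = hv ends e' b' ->
        (pt e b).1 * (pt e' b').2 != (pt e' b').1 * (pt e b).2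
    & forall e, lam e != 0].

Definition jumping : Prop :=
  exists pt lam pt' lam', admissible pt lam /\ admissible pt' lam' /\
    h0 pt lam <> h0 pt' lam'.
End Sections.

Definition G3_ends : 'I_3 -> 'I_2 * 'I_2 := fun _ => (ord0, ord_max).
Definition deg2 (da db : int) : 'I_2 -> int := fun v => if v == ord0 then da else db.

(* Main.v *)
Require Import Defs.
From HB Require Import structures.
From mathcomp Require Import all_boot all_order all_algebra.
From mathcomp Require Import complex reals ring zify.
Import Order.TTheory GRing.Theory Num.Theory.
Local Open Scope ring_scope.
Set Implicit Arguments. Unset Strict Implicit.

Definition o0 : 'I_3 := @Ordinal 3 0 isT.
Definition o1 : 'I_3 := @Ordinal 3 1 isT.
Definition o2 : 'I_3 := @Ordinal 3 2 isT.

Lemma ord3P (e : 'I_3) : [\/ e = o0, e = o1 | e = o2].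
Proof.
case: e => [[|[|[|//]]] H].
- by apply: Or31; apply/val_inj.
- by apply: Or32; apply/val_inj.
- by apply: Or33; apply/val_inj.
Qed.

Section Alg.
Variable K : fieldType.

Lemma sum3 (F : 'I_3 -> K) : \sum_i F i = F o0 + F o1 + F o2.
Proof.
rewrite !big_ord_recr big_ord0 /= add0r.
by congr (F _ + F _ + F _); apply/val_inj.
Qed.

Lemma V3 (c0 c1 c2 x0 y0 x1 y1 x2 y2 : K) :
  x0*y1 != x1*y0 -> x0*y2 != x2*y0 ->
  c0*y0^+2 + c1*y1^+2 + c2*y2^+2 = 0 ->
  c0*(x0*y0) + c1*(x1*y1) + c2*(x2*y2) = 0 ->
  c0*x0^+2 + c1*x1^+2 + c2*x2^+2 = 0 -> c0 = 0.
Proof.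
move=> d1 d2 E0 E1 E2.
have H : c0 * ((x0*y1 - x1*y0) * (x0*y2 - x2*y0)) =
   y1*y2*(c0*x0^+2 + c1*x1^+2 + c2*x2^+2)
   - (y1*x2 + x1*y2) * (c0*(x0*y0) + c1*(x1*y1) + c2*(x2*y2))
   + x1*x2*(c0*y0^+2 + c1*y1^+2 + c2*y2^+2) by ring.
move: H; rewrite E0 E1 E2 !mulr0 subrr addr0 => /eqP.
by rewrite !mulf_eq0 !subr_eq0 (negbTE d1) (negbTE d2) /= orbF => /eqP.
Qed.

Definition distinct3 (p : 'I_3 -> K * K) :=
  forall e e', e != e' -> (p e).1 * (p e').2 != (p e').1 * (p e).2.

Lemma V3all (p : 'I_3 -> K*K) (c : 'I_3 -> K) : distinct3 p ->
  \sum_i c i * (p i).2 ^+ 2 = 0 ->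
  \sum_i c i * ((p i).1 * (p i).2) = 0 ->
  \sum_i c i * (p i).1 ^+ 2 = 0 -> forall e, c e = 0.
Proof.
rewrite !sum3 => D E0 E1 E2 e.
have d01 := D o0 o1 isT; have d02 := D o0 o2 isT; have d10 := D o1 o0 isT.
have d12 := D o1 o2 isT; have d20 := D o2 o0 isT; have d21 := D o2 o1 isT.
have [->|->|->] := ord3P e.
- exact: (V3 d01 d02 E0 E1 E2).
- apply: (V3 (c1:=c o0) (c2:=c o2) d10 d12); [rewrite -E0 | rewrite -E1 | rewrite -E2]; ring.
- apply: (V3 (c1:=c o0) (c2:=c o1) d20 d21); [rewrite -E0 | rewrite -E1 | rewrite -E2]; ring.
Qed.

Definition mon (p:K*K) n k : K := p.1 ^+ k * p.2 ^+ (n.-1 - k).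

Lemma distinct_nz (p : 'I_3 -> K*K) e : distinct3 p -> p e != (0,0).
Proof.
move=> D; apply/eqP => He.
have [e' ne] : exists e', e != e'.
  have [->|->|->] := ord3P e; [exists o1 | exists o0 | exists o0]; done.
by move: (D e e' ne); rewrite He /= !mul0r mulr0 eqxx.
Qed.

Lemma veronese n (p : 'I_3 -> K*K) (b : 'I_3 -> K) : (3 <= n)%N -> distinct3 p ->
  (forall k, (k < n)%N -> \sum_e b e * mon (p e) n k = 0) -> forall e, b e = 0.
Proof.
case: n => [|[|[|D]]] // _ Dp Hk e.
pose k0 := if (p e).2 == 0 then D else 0%N.
have k0D : (k0 <= D)%N by rewrite /k0; case: ifP.
pose c i := b i * ((p i).1 ^+ k0 * (p i).2 ^+ (D - k0)).
have ce : c e = 0.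
  apply: (V3all (c:=c) Dp).
  - transitivity (\sum_e b e * mon (p e) D.+3 k0); last by apply: Hk; lia.
    apply: eq_bigr => i _; rewrite /c /mon /= -mulrA; congr (_ * _).
    have -> : (D.+2 - k0 = (D - k0).+2)%N by lia.
    by rewrite !exprS; ring.
  - transitivity (\sum_e b e * mon (p e) D.+3 k0.+1); last by apply: Hk; lia.
    apply: eq_bigr => i _; rewrite /c /mon /= -mulrA; congr (_ * _).
    have -> : (D.+2 - k0.+1 = (D - k0).+1)%N by lia.
    by rewrite !exprS; ring.
  - transitivity (\sum_e b e * mon (p e) D.+3 k0.+2); last by apply: Hk; lia.
    apply: eq_bigr => i _; rewrite /c /mon /= -mulrA; congr (_ * _).
    have -> : (D.+2 - k0.+2 = (D - k0))%N by lia.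
    by rewrite !exprS; ring.
move: ce; rewrite /c => /eqP; rewrite mulf_eq0 => /orP[/eqP //|].
rewrite mulf_eq0 !expf_eq0 /k0.
have nz := distinct_nz e Dp.
case: eqP => [y0|/eqP yn].
- rewrite subnn => /orP[/andP[_ /eqP x0]|/andP[] //].
  by move: nz; rewrite [p e]surjective_pairing x0 y0 eqxx.
- by move=> /orP[/andP[]|/andP[]].
Qed.


Lemma sum2 (F : 'I_2 -> K) : \sum_i F i = F ord0 + F ord_max.
Proof.
rewrite !big_ord_recr big_ord0 /= add0r.
by congr (F _ + F _); apply/val_inj.
Qed.

Lemma inj_small n (p : 'I_3 -> K*K) (g : 'I_n -> K) : (n <= 2)%N -> distinct3 p ->
  (forall e, \sum_(k < n) g k * mon (p e) n k = 0) -> forall k, g k = 0.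
Proof.
case: n g => [|[|[|//]]] g _ Dp Hk k.
- by case: k.
- have := Hk o0; rewrite big_ord1 /mon /= !expr0 !mulr1 => H.
  case: k => [[|//] Hk']; rewrite -H; congr g; exact/val_inj.
- have E0 := Hk o0; have E1 := Hk o1; have e1 : widen_ord (leqnSn 1) ord_max = ord0 :> 'I_2 by apply/val_inj.
  rewrite !big_ord_recr big_ord0 /= add0r /mon /= !expr0 !expr1 e1 in E0.
  rewrite !big_ord_recr big_ord0 /= add0r /mon /= !expr0 !expr1 e1 in E1.
  have d01 := Dp o0 o1 isT.
  have H1 : g ord_max * ((p o0).1 * (p o1).2 - (p o1).1 * (p o0).2) =
     (p o1).2 * (g ord0 * (1 * (p o0).2) + g ord_max * ((p o0).1 * 1))
     - (p o0).2 * (g ord0 * (1 * (p o1).2) + g ord_max * ((p o1).1 * 1)) by ring.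
  have H0 : g ord0 * ((p o0).1 * (p o1).2 - (p o1).1 * (p o0).2) =
     (p o0).1 * (g ord0 * (1 * (p o1).2) + g ord_max * ((p o1).1 * 1))
     - (p o1).1 * (g ord0 * (1 * (p o0).2) + g ord_max * ((p o0).1 * 1)) by ring.
  rewrite E0 E1 !mulr0 subrr in H0 H1.
  move: H0 H1 => /eqP H0 /eqP H1.
  rewrite mulf_eq0 subr_eq0 (negbTE d01) orbF in H0.
  rewrite mulf_eq0 subr_eq0 (negbTE d01) orbF in H1.
  case: k => [[|[|//]]] Hk'.
  + have -> : Ordinal Hk' = ord0 by apply/val_inj.
    exact/eqP.
  + have -> : Ordinal Hk' = ord_max by apply/val_inj.
    exact/eqP.
Qed.
End Alg.

Section Main.
Variable K : fieldType.
Variable d : 'I_2 -> int.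
Variables (pt : 'I_3 -> bool -> K*K) (lam : 'I_3 -> K).

Definition sv (v : 'I_2) (e : 'I_3) : K := if v == ord_max then 1 else - lam e.
Definition pv (v:'I_2) e := pt e (v == ord_max).
Definition W (e : 'I_3) (x : coefT d) : K :=
  sv (tag x) e * mon (pv (tag x) e) (dn (d (tag x))) (tagged x).

Lemma defectE c e : glue_defect G3_ends pt lam c e = \sum_x c x * W e x.
Proof.
rewrite ffunE.
have := @sig_big_dep K 0 +%R 'I_2 (fun v => 'I_(dn (d v))) xpredT (fun _ => xpredT)
   (fun v k => c (Tagged (fun w => 'I_(dn (d w))) k) * W e (Tagged (fun w => 'I_(dn (d w))) k)).
rewrite /= => E.
have -> : \sum_x c x * W e x = \sum_(p : coefT d)
        c (Tagged (fun w : 'I_2 => 'I_(dn (d w))) (tagged p)) *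
        W e (Tagged (fun w : 'I_2 => 'I_(dn (d w))) (tagged p)).
  by apply: eq_bigr => -[].
rewrite -E.
rewrite big_ord_recl big_ord1 /sec_eval /hv /G3_ends /=.
rewrite addrC mulr_sumr -sumrN.
rewrite (_ : lift ord0 ord0 = ord_max :> 'I_2); last exact/val_inj. congr (_ + _); apply: eq_bigr => k _;
  rewrite /W /sv /pv /mon /=.
- by rewrite eqxx mul1r mulrA.
- have -> : (ord0 == ord_max :> 'I_2) = false by [].
  ring.
Qed.

Definition gd := glue_defect G3_ends (d:=d) pt lam.

Lemma gd_linear : linear gd.
Proof.
move=> a c c'; apply/ffunP => e.
transitivity (\sum_x (a *: c + c') x * W e x); first exact: defectE.
rewrite [RHS]ffunE [in RHS]ffunE /gd !defectE scaler_sumr -big_split /=.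
apply: eq_bigr => x _; rewrite !ffunE /=.
by rewrite mulrDl -scalerAl.
Qed.

HB.instance Definition _ := GRing.isSemilinear.Build K (secs K d) {ffun 'I_3 -> K^o} _ gd
  (GRing.semilinear_linear gd_linear).

Lemma phiE c : linfun gd c = gd c.
Proof. exact: lfunE. Qed.

Lemma h0E : h0 G3_ends d pt lam = (#|coefT d| - \dim (limg (linfun gd)))%N.
Proof.
rewrite /h0 -/gd.
have := limg_ker_dim (linfun gd) fullv; rewrite capfv dimvf => E.
by rewrite -(addnK (\dim (limg (linfun gd))) (\dim (lker (linfun gd)))) E /dim /= muln1.
Qed.
Lemma dimS : dim (secs K d) = #|coefT d|.
Proof. by rewrite /dim /= muln1. Qed.

Lemma limg_full : (forall a : 'I_3 -> K, (forall x, \sum_e a e * W e x = 0) -> forall e, a e = 0) ->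
  \dim (limg (linfun gd)) = 3%N.
Proof.
move=> indep.
pose Mt : 'M[K]_(3, #|coefT d|) := \matrix_(e, i) W e (enum_val i).
have fr : row_free Mt.
  apply: inj_row_free => v Hv; apply/rowP => e; rewrite mxE.
  apply: (indep (fun e => v 0 e)) => x.
  have := congr1 (fun M : 'rV_(#|coefT d|) => M 0 (enum_rank x)) Hv; rewrite !mxE => H.
  transitivity (\sum_j v 0 j * Mt j (enum_rank x)); last exact: H.
  by apply: eq_bigr => e' _; rewrite mxE enum_rankK.
have fl : row_full Mt^T by rewrite /row_full mxrank_tr.
case/row_fullP: fl => B HB.
have surj (t : {ffun 'I_3 -> K^o}) : exists c, gd c = t.
  pose u := (\row_e t e) *m B.
  exists [ffun x => u 0 (enum_rank x)]; apply/ffunP => e; rewrite defectE.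
  transitivity ((u *m Mt^T) 0 e); last by rewrite -mulmxA HB mulmx1 mxE.
  rewrite mxE (reindex (fun i : 'I_#|coefT d| => enum_val i)) /=; last first.
    by exists enum_rank => x _; rewrite ?enum_valK ?enum_rankK.
  by apply: eq_bigr => i _; rewrite ffunE enum_valK !mxE.
have E : limg (linfun gd) = fullv.
  apply/eqP; rewrite eqEsubv subvf /=; apply/subvP => t _.
  have [c <-] := surj t; by rewrite -phiE memv_img ?memvf.
by rewrite E dimvf /dim /= card_ord muln1.
Qed.

Lemma limg_le2 (a : 'I_3 -> K) e0 : a e0 != 0 -> (forall x, \sum_e a e * W e x = 0) ->
  (\dim (limg (linfun gd)) <= 2)%N.
Proof.
move=> nz ann; rewrite leqNgt; apply/negP => H3.
have E : limg (linfun gd) = fullv.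
  apply/eqP; rewrite eqEdim subvf /= dimvf /dim /= card_ord muln1 //.
pose t : {ffun 'I_3 -> K^o} := [ffun e => (e == e0)%:R].
have : t \in limg (linfun gd) by rewrite E memvf.
case/memv_imgP => c _; rewrite phiE => Ht.
have : \sum_e a e * t e = 0.
  rewrite Ht; under eq_bigr => e _ do rewrite defectE mulr_sumr.
  rewrite exchange_big /= big1 // => x _.
  transitivity (c x * \sum_e a e * W e x); last by rewrite ann mulr0.
  by rewrite mulr_sumr; apply: eq_bigr => e _; ring.
rewrite (bigD1 e0) //= big1 ?addr0 => [|e ne].
  by rewrite ffunE eqxx mulr1 => /eqP; rewrite (negbTE nz).
by rewrite ffunE (negbTE ne) mulr0.
Qed.

Lemma h0_eq0 : (forall c, gd c = 0 -> c = 0) -> h0 G3_ends d pt lam = 0%N.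
Proof.
move=> inj; rewrite /h0; apply/eqP; rewrite dimv_eq0; apply/lker0P => c c' H.
rewrite !phiE in H; apply/eqP; rewrite -subr_eq0; apply/eqP; apply: inj.
by rewrite linearB /= H subrr.
Qed.

Lemma h0_gt0 c : c != 0 -> gd c = 0 -> (0 < h0 G3_ends d pt lam)%N.
Proof.
move=> nz H; rewrite /h0 lt0n dimv_eq0; apply/negP => /lker0P inj.
by move/negP: nz; apply; apply/eqP; apply: inj; rewrite !phiE linear0 -/gd H.
Qed.

Lemma adm_dist b : admissible G3_ends pt lam -> distinct3 (fun e => pt e b).
Proof.
case=> _ H _ e e' ne; apply: H => //.
by apply: contra ne => /eqP [->].
Qed.

Lemma sv_neq0 v e : admissible G3_ends pt lam -> sv v e != 0.
Proof.
case=> _ _ H; rewrite /sv; case: ifP => _; first exact: oner_neq0.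
by rewrite oppr_eq0.
Qed.

Lemma G1 v : (3 <= dn (d v))%N -> admissible G3_ends pt lam ->
  h0 G3_ends d pt lam = (#|coefT d| - 3)%N.
Proof.
move=> Hn adm; rewrite h0E limg_full // => a Hx e.
have := @veronese K (dn (d v)) (pv v) (fun e => a e * sv v e) Hn (adm_dist _ adm).
case/(_ _ e)/Wrap.
- move=> k Hk.
  transitivity (\sum_e a e * W e (Tagged (fun w => 'I_(dn (d w))) (Ordinal Hk))); last exact: Hx.
  by apply: eq_bigr => e' _; rewrite /W /= mulrA.
- by move/eqP; rewrite mulf_eq0 (negbTE (sv_neq0 v e adm)) orbF => /eqP.
Qed.
Lemma ord2_other (u v w : 'I_2) : u != w -> v != w -> u = v.
Proof.
move: u v w => [a ha] [b hb] [c hc]; rewrite -!(inj_eq val_inj) /= => h1 h2.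
apply/val_inj => /=; lia.
Qed.

Lemma gdE c e : gd c e = \sum_(u : 'I_2) sv u e * sec_eval c u (pv u e).
Proof.
rewrite /gd ffunE sum2 /sv /pv /hv /G3_ends /=.
have -> : (ord0 == ord_max :> 'I_2) = false by [].
rewrite eqxx; ring.
Qed.

Lemma G2 v w : v != w -> dn (d w) = 0%N -> (dn (d v) <= 2)%N -> admissible G3_ends pt lam ->
  h0 G3_ends d pt lam = 0%N.
Proof.
move=> vw Hw Hv adm; apply: h0_eq0 => c Hc.
have Sw p : sec_eval c w p = 0.
  by apply: big1 => k _; have h := ltn_ord k; exfalso; move: (nat_of_ord k) h => kk; rewrite Hw.
have He e : sec_eval c v (pv v e) = 0.
  have := congr1 (fun f : {ffun 'I_3 -> K^o} => f e) Hc; rewrite /= gdE ffunE (bigD1 v) //=.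
  rewrite big1 ?addr0 => [/eqP|u uv].
    by rewrite mulf_eq0 (negbTE (sv_neq0 v e adm)) /= => /eqP.
  have wv : w != v by rewrite eq_sym.
  by rewrite (ord2_other uv wv) Sw mulr0.
have g0 := @inj_small K _ (pv v) (fun k => c (Tagged (fun w => 'I_(dn (d w))) k)) Hv (adm_dist _ adm).
apply/ffunP => -[u k]; rewrite ffunE.
case: (eqVneq u w) => [uw|uw].
  by have h := ltn_ord k; exfalso; move: (nat_of_ord k) h => kk; rewrite uw Hw.
have uv := ord2_other uw vw; subst u.
apply: g0 => e; transitivity (sec_eval c v (pv v e)); last exact: He.
by apply: eq_bigr => k' _; rewrite /mon mulrA.
Qed.
End Main.



Lemma ord2P (v : 'I_2) : v = ord0 \/ v = ord_max.
Proof. case: v => [[|[|//]]] H; [left|right]; exact/val_inj. Qed.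

Lemma nonjump (K : fieldType) d :
  ~~ ((0 < dn (d ord0) <= 2) && (0 < dn (d ord_max) <= 2))%N -> ~ jumping K G3_ends d.
Proof.
move=> H [pt [lam [pt' [lam' [a1 [a2 hne]]]]]]; apply: hne.
case: (leqP 3 (dn (d ord0))) => h1; first by rewrite (G1 h1 a1) (G1 h1 a2).
case: (leqP 3 (dn (d ord_max))) => h2; first by rewrite (G1 h2 a1) (G1 h2 a2).
have [z0|z1] : dn (d ord0) = 0%N \/ dn (d ord_max) = 0%N.
  move: H h1 h2; move: (dn (d ord0)) (dn (d ord_max)) => x y; lia.
- have h : ord_max != ord0 :> 'I_2 by [].
  by rewrite (G2 h z0 _ a1) ?(G2 h z0 _ a2) // -ltnS.
- have h : ord0 != ord_max :> 'I_2 by [].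
  by rewrite (G2 h z1 _ a1) ?(G2 h z1 _ a2) // -ltnS.
Qed.

Lemma dn_range (x : int) : (0 <= x <= 1) = (0 < dn x <= 2)%N.
Proof. by case: x => [[|[|n]]|n]. Qed.

Definition tg (d : 'I_2 -> int) (v : 'I_2) (k : nat) (H : (k < dn (d v))%N) : coefT d :=
  Tagged (fun w => 'I_(dn (d w))) (Ordinal H).

Section Cases.
Variable K : fieldType.
Hypothesis two : (2%:R : K) != 0.

Definition P (e : 'I_3) : K*K :=
  if val e == 0%N then (1,0) else if val e == 1%N then (0,1) else (1,1).
Definition ptP : 'I_3 -> bool -> K*K := fun e _ => P e.

Lemma distP : distinct3 P.
Proof.
move=> e e'; have [->|->|->] := ord3P e; have [->|->|->] := ord3P e' => //= _;
  rewrite /P /= ?mul1r ?mulr1 ?mul0r ?mulr0 ?oner_eq0 //; try by rewrite eq_sym oner_eq0.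
all: by [].
Qed.

Lemma admP lam : (forall e, lam e != 0) -> admissible G3_ends ptP lam.
Proof.
move=> hl; split => //.
- by move=> e b; apply: distinct_nz distP.
- move=> e b e' b' ne hh.
  have bb : b = b'.
    by move: ne hh; rewrite /hv /G3_ends /=; case: b; case: b' => // _ /(congr1 val).
  subst b'; apply: distP; apply: contra ne => /eqP ->; by [].
Qed.

Variable d : 'I_2 -> int.

Lemma Wtg (pt : 'I_3 -> bool -> K*K) (lam : 'I_3 -> K) v k (H : (k < dn (d v))%N) e :
  W pt lam e (tg H) = sv lam v e * mon (pv pt v e) (dn (d v)) k.
Proof. by []. Qed.

Lemma mon10 (p : K*K) n : n = 1%N -> mon p n 0 = 1.
Proof. by move=> ->; rewrite /mon /= mulr1. Qed.
Lemma mon20 (p : K*K) n : n = 2%N -> mon p n 0 = p.2.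
Proof. by move=> ->; rewrite /mon /= mul1r expr1. Qed.
Lemma mon21 (p : K*K) n : n = 2%N -> mon p n 1 = p.1.
Proof. by move=> ->; rewrite /mon /= mulr1 expr1. Qed.
Lemma sv0 (lam : 'I_3 -> K) e : sv lam ord0 e = - lam e.
Proof. by []. Qed.
Lemma sv1 (lam : 'I_3 -> K) e : sv lam ord_max e = 1.
Proof. by rewrite /sv eqxx. Qed.

Lemma comb3 (x y z u v w X : K) : x = 0 -> y = 0 -> z = 0 -> X = u*x + v*y + w*z -> X = 0.
Proof. by move=> -> -> -> ->; rewrite !mulr0 !addr0. Qed.

Lemma dim_limg_le (pt : 'I_3 -> bool -> K*K) (lam : 'I_3 -> K) : (\dim (limg (linfun (gd (d:=d) pt lam))) <= #|coefT d|)%N.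
Proof.
have := limg_ker_dim (linfun (gd (d:=d) pt lam)) fullv.
rewrite capfv dimvf /dim /= muln1 => <-; exact: leq_addl.
Qed.

Lemma h0_ne (pt pt' : 'I_3 -> bool -> K*K) (lam lam' : 'I_3 -> K) : \dim (limg (linfun (gd (d:=d) pt lam))) = 3%N ->
  (\dim (limg (linfun (gd (d:=d) pt' lam'))) <= 2)%N ->
  h0 G3_ends d pt lam <> h0 G3_ends d pt' lam'.
Proof.
move=> h1 h2; rewrite !h0E.
have := dim_limg_le pt lam; rewrite h1.
move: (#|coefT d|) (\dim (limg (linfun (gd (d:=d) pt' lam')))) h2 => N r; lia.
Qed.


Lemma C22 : dn (d ord0) = 2%N -> dn (d ord_max) = 2%N -> jumping K G3_ends d.
Proof.
move=> E0 E1.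
pose lA : 'I_3 -> K := fun e => if val e == 2%N then 2%:R else 1.
pose lB : 'I_3 -> K := fun _ => 1.
have M00 := fun p => mon20 p E0; have M01 := fun p => mon21 p E0.
have M10 := fun p => mon20 p E1; have M11 := fun p => mon21 p E1.
have H00 : (0 < dn (d ord0))%N by rewrite E0.
have H01 : (1 < dn (d ord0))%N by rewrite E0.
have H10 : (0 < dn (d ord_max))%N by rewrite E1.
have H11 : (1 < dn (d ord_max))%N by rewrite E1.
exists ptP, lA, ptP, lB; split; [|split].
- apply: admP => e; rewrite /lA; case: ifP => _ //; exact: oner_neq0.
- apply: admP => e; exact: oner_neq0.
- apply: h0_ne.
  + apply: limg_full => a Hx.
    have h1 := Hx (tg H10); have h2 := Hx (tg H11); have h3 := Hx (tg H00).
    rewrite sum3 !Wtg ?sv1 ?sv0 ?M00 ?M01 ?M10 ?M11 /pv /ptP /P /lA /= in h1.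
    rewrite sum3 !Wtg ?sv1 ?sv0 ?M00 ?M01 ?M10 ?M11 /pv /ptP /P /lA /= in h2.
    rewrite sum3 !Wtg ?sv1 ?sv0 ?M00 ?M01 ?M10 ?M11 /pv /ptP /P /lA /= in h3.
    move=> e; have [->|->|->] := ord3P e.
    * by apply: (comb3 (u:=1) (v:=1) (w:=1) h1 h2 h3); ring.
    * by apply: (comb3 (u:=2) (v:=0) (w:=1) h1 h2 h3); ring.
    * by apply: (comb3 (u:=-1) (v:=0) (w:=-1) h1 h2 h3); ring.
  + apply: (@limg_le2 _ _ _ _ (fun e => if val e == 2%N then -1 else 1) o0).
      exact: oner_neq0.
    case=> v [k Hk]; rewrite sum3 /W /=.
    have [ev|ev] := ord2P v; subst v.
    * have [->|->] : k = 0%N \/ k = 1%N by move: Hk; rewrite E0; lia.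
      - by rewrite !M00 !sv0 /pv /ptP /P /lB /=; ring.
      - by rewrite !M01 !sv0 /pv /ptP /P /lB /=; ring.
    * have [->|->] : k = 0%N \/ k = 1%N by move: Hk; rewrite E1; lia.
      - by rewrite !M10 !sv1 /pv /ptP /P /lB /=; ring.
      - by rewrite !M11 !sv1 /pv /ptP /P /lB /=; ring.
Qed.
Lemma C12 : dn (d ord0) = 1%N -> dn (d ord_max) = 2%N -> jumping K G3_ends d.
Proof.
move=> E0 E1.
pose lA : 'I_3 -> K := fun _ => 1.
pose lB : 'I_3 -> K := fun e => if val e == 2%N then 2%:R else 1.
have M00 := fun p => mon10 p E0.
have M10 := fun p => mon20 p E1; have M11 := fun p => mon21 p E1.
have H00 : (0 < dn (d ord0))%N by rewrite E0.
have H10 : (0 < dn (d ord_max))%N by rewrite E1.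
have H11 : (1 < dn (d ord_max))%N by rewrite E1.
exists ptP, lA, ptP, lB; split; [|split].
- apply: admP => e; exact: oner_neq0.
- apply: admP => e; rewrite /lB; case: ifP => _ //; exact: oner_neq0.
- apply: h0_ne.
  + apply: limg_full => a Hx.
    have h1 := Hx (tg H00); have h2 := Hx (tg H10); have h3 := Hx (tg H11).
    rewrite sum3 !Wtg ?sv1 ?sv0 ?M00 ?M10 ?M11 /pv /ptP /P /lA /= in h1.
    rewrite sum3 !Wtg ?sv1 ?sv0 ?M00 ?M10 ?M11 /pv /ptP /P /lA /= in h2.
    rewrite sum3 !Wtg ?sv1 ?sv0 ?M00 ?M10 ?M11 /pv /ptP /P /lA /= in h3.
    move=> e; have [->|->|->] := ord3P e.
    * by apply: (comb3 (u:=-1) (v:=-1) (w:=0) h1 h2 h3); ring.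
    * by apply: (comb3 (u:=-1) (v:=0) (w:=-1) h1 h2 h3); ring.
    * by apply: (comb3 (u:=1) (v:=1) (w:=1) h1 h2 h3); ring.
  + apply: (@limg_le2 _ _ _ _ (fun e => if val e == 2%N then -1 else 1) o0).
      exact: oner_neq0.
    case=> v [k Hk]; rewrite sum3 /W /=.
    have [ev|ev] := ord2P v; subst v.
    * have -> : k = 0%N by move: Hk; rewrite E0; lia.
      by rewrite !M00 !sv0 /pv /ptP /P /lB /=; ring.
    * have [->|->] : k = 0%N \/ k = 1%N by move: Hk; rewrite E1; lia.
      - by rewrite !M10 !sv1 /pv /ptP /P /lB /=; ring.
      - by rewrite !M11 !sv1 /pv /ptP /P /lB /=; ring.
Qed.

Lemma C21 : dn (d ord0) = 2%N -> dn (d ord_max) = 1%N -> jumping K G3_ends d.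
Proof.
move=> E0 E1.
pose lA : 'I_3 -> K := fun _ => 1.
pose lB : 'I_3 -> K := fun e => if val e == 2%N then 1 else 2%:R.
have M00 := fun p => mon20 p E0; have M01 := fun p => mon21 p E0.
have M10 := fun p => mon10 p E1.
have H00 : (0 < dn (d ord0))%N by rewrite E0.
have H01 : (1 < dn (d ord0))%N by rewrite E0.
have H10 : (0 < dn (d ord_max))%N by rewrite E1.
exists ptP, lA, ptP, lB; split; [|split].
- apply: admP => e; exact: oner_neq0.
- apply: admP => e; rewrite /lB; case: ifP => _ //; exact: oner_neq0.
- apply: h0_ne.
  + apply: limg_full => a Hx.
    have h1 := Hx (tg H00); have h2 := Hx (tg H01); have h3 := Hx (tg H10).
    rewrite sum3 !Wtg ?sv1 ?sv0 ?M00 ?M01 ?M10 /pv /ptP /P /lA /= in h1.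
    rewrite sum3 !Wtg ?sv1 ?sv0 ?M00 ?M01 ?M10 /pv /ptP /P /lA /= in h2.
    rewrite sum3 !Wtg ?sv1 ?sv0 ?M00 ?M01 ?M10 /pv /ptP /P /lA /= in h3.
    move=> e; have [->|->|->] := ord3P e.
    * by apply: (comb3 (u:=1) (v:=0) (w:=1) h1 h2 h3); ring.
    * by apply: (comb3 (u:=0) (v:=1) (w:=1) h1 h2 h3); ring.
    * by apply: (comb3 (u:=-1) (v:=-1) (w:=-1) h1 h2 h3); ring.
  + apply: (@limg_le2 _ _ _ _ (fun e => if val e == 2%N then -2%:R else 1) o0).
      exact: oner_neq0.
    case=> v [k Hk]; rewrite sum3 /W /=.
    have [ev|ev] := ord2P v; subst v.
    * have [->|->] : k = 0%N \/ k = 1%N by move: Hk; rewrite E0; lia.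
      - by rewrite !M00 !sv0 /pv /ptP /P /lB /=; ring.
      - by rewrite !M01 !sv0 /pv /ptP /P /lB /=; ring.
    * have -> : k = 0%N by move: Hk; rewrite E1; lia.
      by rewrite !M10 !sv1 /pv /ptP /P /lB /=; ring.
Qed.
Lemma sum_ord1 n (F : 'I_n -> K) (H : (0 < n)%N) : n = 1%N -> \sum_(k < n) F k = F (Ordinal H).
Proof. move=> E; move: F H; rewrite E => F H; rewrite big_ord1; congr F; exact/val_inj. Qed.

Lemma sec1 (c : secs K d) u p (H : (0 < dn (d u))%N) : dn (d u) = 1%N ->
  sec_eval c u p = c (Tagged (fun w => 'I_(dn (d w))) (Ordinal H)).
Proof.
move=> E; rewrite /sec_eval (sum_ord1 _ H E) /=.
have -> : ((dn (d u)).-1 - 0 = 0)%N by rewrite E.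
by rewrite !expr0 !mulr1.
Qed.

Lemma C11 : dn (d ord0) = 1%N -> dn (d ord_max) = 1%N -> jumping K G3_ends d.
Proof.
move=> E0 E1.
pose lA : 'I_3 -> K := fun _ => 1.
pose lB : 'I_3 -> K := fun e => if val e == 0%N then 1 else 2%:R.
have H00 : (0 < dn (d ord0))%N by rewrite E0.
have H10 : (0 < dn (d ord_max))%N by rewrite E1.
exists ptP, lA, ptP, lB; split; [|split].
- apply: admP => e; exact: oner_neq0.
- apply: admP => e; rewrite /lB; case: ifP => _ //; exact: oner_neq0.
- move=> E.
  have : (0 < h0 G3_ends d ptP lA)%N.
    apply: (@h0_gt0 _ _ _ _ [ffun _ => 1]).
      apply/eqP => /ffunP /(_ (tg H00)); rewrite !ffunE => /eqP.
      by rewrite oner_eq0.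
    apply/ffunP => e; rewrite gdE sum2 (sec1 _ _ H00 E0) (sec1 _ _ H10 E1) !ffunE sv0 sv1 /lA.
    ring.
  rewrite E (@h0_eq0 _ _ _ _ _) //.
  move=> c Hc.
  have h e := congr1 (fun f : {ffun 'I_3 -> K^o} => f e) Hc.
  have h0 := h o0; have h1 := h o1.
  rewrite /= gdE sum2 (sec1 _ _ H00 E0) (sec1 _ _ H10 E1) ffunE sv0 sv1 /lB /= in h0.
  rewrite /= gdE sum2 (sec1 _ _ H00 E0) (sec1 _ _ H10 E1) ffunE sv0 sv1 /lB /= in h1.
  apply/ffunP => -[v [k Hk]]; rewrite ffunE.
  have k0 : k = 0%N by move: (Hk); case: (ord2P v) => ->; rewrite ?E0 ?E1; lia.
  subst k.
  have [ev|ev] := ord2P v; subst v.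
  + have -> : Ordinal Hk = Ordinal H00 by apply/val_inj.
    by apply: (comb3 (u:=1) (v:=-1) (w:=0) h0 h1 h0); ring.
  + have -> : Ordinal Hk = Ordinal H10 by apply/val_inj.
    by apply: (comb3 (u:=2) (v:=-1) (w:=0) h0 h1 h0); ring.
Qed.
End Cases.

Unset Implicit Arguments.

Lemma range12 n : (0 < n <= 2)%N -> n = 1%N \/ n = 2%N.
Proof. lia. Qed.

Theorem mainTheorem10 (R : realType) (da db : int) :
  jumping (R[i]) G3_ends (deg2 da db) <->
  ((0 <= da <= 1) /\ (0 <= db <= 1)).
Proof.
have two : (2%:R : R[i]) != 0 by rewrite pnatr_eq0.
rewrite !dn_range; split.
- move=> J; apply/andP; apply: contraT => H.
  by case: (@nonjump R[i] (deg2 da db) H J).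
- case=> A B.
  case: (range12 _ A) => E0; case: (range12 _ B) => E1.
  + exact: (@C11 _ two (deg2 da db) E0 E1).
  + exact: (@C12 _ two (deg2 da db) E0 E1).
  + exact: (@C21 _ two (deg2 da db) E0 E1).
  + exact: (@C22 _ two (deg2 da db) E0 E1).
Qed.
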